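(* Let $k\ge3$, let $G$ be a graph, and let $L$ be a $k$-list assignment for $G$. Let $S=G[\{v_1,\dots,v_s\}]$ be an induced subgraph with $s\le k$. If for every $i\in\{1,\dots,s\}$ the number of neighbors of $v_i$ in $V(G)\setminus V(S)$ is less than $i$, then $S$ is safe in $G$ (with respect to $L$).
   Context: A $k$-list assignment $L$ for $G$ assigns to each vertex $v$ a set $L(v)$ of exactly $k$ colors; an $L$-coloring is a proper vertex coloring $f$ with $f(v)\in L(v)$. For an integer $n$ and $k\ge1$, $n\bmod^* k$ is the unique $m\in\{1,\dots,k\}$ with $n\equiv m\pmod k$. If $|V(G)|=n\ge 1$, an $L$-coloring $f$ of $G$ is strongly equitable (SE) if every color class has at most $\lceil n/k\rceil$ vertices and the number of colors whose class has exactly $\lceil n/k\rceil$ vertices (the full classes) is at most $n\bmod^* k$; the empty graph is regarded as SE $L$-colorable. A subgraph $S\subseteq G$ is safe in $G$ if every SE $L$-coloring of $G-V(S)$ (with the restriction of $L$) can be extended to an SE $L$-coloring of $G$. *)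

(* Defs.v *)
From mathcomp Require Import all_boot.
Set Implicit Arguments. Unset Strict Implicit. Unset Printing Implicit Defensive.

Definition simple_graph (T : finType) (e : rel T) : Prop :=
  symmetric e /\ irreflexive e.

Definition k_list_assignment (T C : finType) (k : nat) (L : T -> {set C}) : Prop :=
  forall v, #|L v| = k.

Definition modstar (n k : nat) : nat := if n %% k == 0 then k else n %% k.

Definition ceildiv (n k : nat) : nat := (n + k.-1) %/ k.

Definition L_coloring (T C : finType) (e : rel T) (L : T -> {set C})
    (U : {set T}) (f : T -> C) : Prop :=
  (forall v, v \in U -> f v \in L v) /\
  (forall u v, u \in U -> v \in U -> e u v -> f u != f v).

Definition color_class (T C : finType) (U : {set T}) (f : T -> C) (c : C) : {set T} :=
  [set v in U | f v == c].

Definition SE_coloring (T C : finType) (k : nat) (e : rel T) (L : T -> {set C})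
    (U : {set T}) (f : T -> C) : Prop :=
  L_coloring e L U f /\
  (U = set0 \/
   ((forall c, #|color_class U f c| <= ceildiv #|U| k) /\
    #|[set c : C | #|color_class U f c| == ceildiv #|U| k]| <= modstar #|U| k)).

Definition safe (T C : finType) (k : nat) (e : rel T) (L : T -> {set C})
    (S : {set T}) : Prop :=
  forall f : T -> C, SE_coloring k e L (~: S) f ->
    exists g : T -> C, SE_coloring k e L setT g /\ (forall v, v \notin S -> g v = f v).

(* Main.v *)
Require Import Defs.
From mathcomp Require Import all_boot zify.
Set Implicit Arguments. Unset Strict Implicit. Unset Printing Implicit Defensive.

Lemma cm_char k a b : 0 < b <= k ->
  ceildiv (a * k + b) k = a.+1 /\ modstar (a * k + b) k = b.
Proof.
move=> /andP[b0 bk]; have k0 : 0 < k by lia.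
split.
  rewrite /ceildiv.
  have -> : a * k + b + k.-1 = a.+1 * k + b.-1 by rewrite mulSnr; lia.
  by rewrite divnMDl // divn_small ?addn0 //; lia.
rewrite /modstar modnMDl.
case: (ltnP b k) => hb.
  by rewrite modn_small //; case: eqP => //; lia.
have -> : b = k by lia.
by rewrite modnn.
Qed.

Lemma decomp n k : 0 < n -> 0 < k -> exists a b, n = a * k + b /\ 0 < b <= k.
Proof.
move=> n0 k0; have e := divn_eq n k.
case: (boolP (n %% k == 0)) => /eqP h.
  rewrite h addn0 in e.
  move: e; case q: (n %/ k) => [|q'] e; first by lia.
  exists q', k; split; last by lia.
  by rewrite e mulSnr.
exists (n %/ k), (n %% k); split => //.
by rewrite lt0n (ltnW (ltn_pmod _ k0)) andbT; apply/eqP.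
Qed.

Lemma count_card (C : finType) (P : pred C) (cs : seq C) : uniq cs ->
  count P cs = #|[set x in cs | P x]|.
Proof.
move=> u; rewrite -size_filter.
have /card_uniqP <- : uniq (filter P cs) by rewrite filter_uniq.
by apply: eq_card => x; rewrite !inE mem_filter andbC.
Qed.

Lemma count_nth_card (C : finType) (P : pred C) (cs : seq C) (x0 : C) :
  count P cs = #|[set j : 'I_(size cs) | P (nth x0 cs j)]|.
Proof.
rewrite cardE /enum_mem size_filter -enumT.
rewrite -{1}(mkseq_nth x0 cs) /mkseq -val_enum_ord !count_map.
by apply: eq_count => j; rewrite /= inE.
Qed.
Lemma count_nth_card' (C:finType) (P : pred C) cs s (d : 'I_s -> C) :
  size cs = s -> count P cs = #|[set j : 'I_s | P (nth (d j) cs j)]|.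
Proof.
move=> sz; subst s; case: cs d => [|x0 cs'] d.
  apply/esym/eqP; rewrite -leqn0; apply: leq_trans (max_card _) _; by rewrite card_ord.
rewrite (@count_nth_card _ _ _ x0); apply: eq_card => j; rewrite !inE.
by rewrite (set_nth_default (d j) x0).
Qed.

Lemma greedy (C : finType) (k s : nat) (F : {set C}) (Lw Xw : nat -> {set C}) :
  s <= k -> (forall i, i < s -> #|Lw i| = k) -> (forall i, i < s -> #|Xw i| <= i) ->
  exists cs : seq C, [/\ size cs = s, uniq cs,
    (forall x0 t, t < s -> nth x0 cs t \in Lw t /\ nth x0 cs t \notin Xw t) &
    count (mem F) cs <= #|F| + s - k].
Proof.
move=> sk hL hX.
suff: forall j, j <= s -> exists cs : seq C, [/\ size cs = j, uniq cs,
    (forall x0 t, t < j -> nth x0 cs (t) \in Lw (s - j + t) /\ nth x0 cs t \notin Xw (s - j + t)) &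
    count (mem F) cs <= #|F| + s - k].
  move=> /(_ s (leqnn s)) [cs [h1 h2 h3 h4]]; exists cs; split => //.
  by move=> x0 t ts; have := h3 x0 t ts; rewrite subnn add0n.
elim=> [|j IH] js.
  by exists [::]; split.
have [cs [sz u hn hc]] := IH (ltnW js).
set i0 := s - j.+1.
have i0s : i0 < s by rewrite /i0; lia.
set A := Lw i0 :\: (Xw i0 :|: [set x in cs]).
have csz : #|[set x in cs]| = j.
  rewrite -sz; have /card_uniqP <- := u; by apply: eq_card => x; rewrite inE.
have Acard : k - s + 1 <= #|A|.
  rewrite /A cardsD hL //.
  have h1 : #|Lw i0 :&: (Xw i0 :|: [set x in cs])| <= #|Xw i0| + j.
    apply: leq_trans (subset_leq_card (subsetIr _ _)) _.
    by rewrite cardsU -csz leq_subr.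
  have := hX _ i0s; rewrite /i0 in h1 *; lia.
have Hgood : forall x, x \in A -> forall t, t < j.+1 ->
   nth x (x :: cs) t \in Lw (s - j.+1 + t) /\ nth x (x :: cs) t \notin Xw (s - j.+1 + t).
  move=> x xA t tj; have xA' := xA; rewrite /A !inE negb_or in xA'.
  case/andP: xA' => /andP[xX xcs] xL.
  case: t tj => [|t] tj /=; first by rewrite addn0.
  have -> : s - j.+1 + t.+1 = s - j + t by lia.
  exact: hn.
have Hu : forall x, x \in A -> uniq (x :: cs).
  by move=> x; rewrite /A !inE negb_or /= u andbT => /andP[/andP[_ ->]].
case: (pickP [pred x in A | x \notin F]) => [x /andP[xA xF] | none].
  exists (x :: cs); split; [by rewrite /= sz | exact: Hu | | ].
    by move=> x0 t tj; rewrite (set_nth_default x); [exact: Hgood | rewrite /= sz].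
  by rewrite /= (negbTE xF).
have : 0 < #|A| by lia.
case/card_gt0P => x xA.
have AF : A \subset F.
  apply/subsetP => y yA; have := none y; rewrite /= yA /=; by move/negbFE.
have disj : count (mem F) cs + #|A| <= #|F|.
  rewrite (count_card _ u).
  set B := [set x in cs | x \in F].
  have -> : #|B| + #|A| = #|B :|: A|.
    rewrite cardsU.
    have -> : B :&: A = set0.
      apply/setP => y; rewrite /A !inE ?negb_or.
      by case: (y \in cs) => //=; rewrite !andbF.
    by rewrite cards0 subn0.
  apply: subset_leq_card; rewrite subUset AF andbT.
  by apply/subsetP => y; rewrite inE => /andP[].
exists (x :: cs); split; [by rewrite /= sz | exact: Hu | | ].
  by move=> x0 t tj; rewrite (set_nth_default x); [exact: Hgood | rewrite /= sz].
rewrite /= (subsetP AF x xA).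
lia.
Qed.

Theorem lemma4p1 (T C : finType) (e : rel T) (k s : nat) (L : T -> {set C})
    (v : 'I_s -> T) :
  simple_graph e -> 3 <= k -> k_list_assignment k L ->
  injective v -> s <= k ->
  (forall i : 'I_s,
     #|[set u | e (v i) u & u \notin [set v j | j : 'I_s]]| < i.+1) ->
  safe k e L [set v j | j : 'I_s].
Proof.
move=> [esym eirr] k3 kL vinj sk hdeg f [[fL fP] fSE].
set S := [set v j | j : 'I_s].
set n' := #|~: S|.
pose cls a := #|color_class (~: S) f a|.
pose F := if n' == 0 then set0 else [set a | cls a == ceildiv n' k].
pose X (i : 'I_s) := f @: [set u | e (v i) u & u \notin S].
pose Lw (n : nat) := if insub n is Some j then L (v j) else set0.
pose Xw (n : nat) := if insub n is Some j then X j else set0.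
have [cs [sz u hn hc]] : exists cs : seq C, [/\ size cs = s, uniq cs,
    (forall x0 t, t < s -> nth x0 cs t \in Lw t /\ nth x0 cs t \notin Xw t) &
    count (mem F) cs <= #|F| + s - k].
  apply: greedy => // i hi; rewrite /Lw /Xw; case: insubP => [j _ ji|]; rewrite ?hi //.
  rewrite /X; apply: leq_trans (leq_imset_card _ _) _.
  by rewrite -ji -ltnS hdeg.
pose c (j : 'I_s) := nth (f (v j)) cs j.
have cL j : c j \in L (v j).
  by have [+ _] := hn (f (v j)) j (ltn_ord j); rewrite /Lw valK.
have cX j : c j \notin X j.
  by have [_ +] := hn (f (v j)) j (ltn_ord j); rewrite /Xw valK.
have cinj : injective c.
  move=> j j'; rewrite /c (set_nth_default (f (v j)) (f (v j'))) ?sz //.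
  by move/eqP; rewrite nth_uniq ?sz // => /eqP/val_inj.
pose g x := if [pick j | v j == x] is Some j then c j else f x.
have gv j : g (v j) = c j.
  rewrite /g; case: pickP => [j' /eqP/vinj -> //|].
  by move/(_ j); rewrite eqxx.
have gout x : x \notin S -> g x = f x.
  move=> xS; rewrite /g; case: pickP => [j' /eqP ej|//].
  by case/negP: xS; rewrite -ej imset_f.
have inS x : x \in S -> (exists j, x = v j) by case/imsetP => j _ ->; exists j.
exists g; split; last by [].
split.
  split.
    move=> x _; case: (boolP (x \in S)) => [/inS [j ->]|xS].
      by rewrite gv.
    by rewrite gout // fL // inE.
  move=> x y _ _.
  case: (boolP (x \in S)) => [/inS [j ->]|xS];
  case: (boolP (y \in S)) => [/inS [j' ->]|yS] => exy.
  - rewrite !gv; apply/negP => /eqP /cinj ejj.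
    by move: exy; rewrite ejj eirr.
  - rewrite gv gout //; apply/negP => /eqP ec.
    by move: (cX j); rewrite ec /X imset_f // inE exy.
  - rewrite gv gout //; apply/negP => /eqP ec.
    by move: (cX j'); rewrite -ec /X imset_f // inE esym exy.
  - by rewrite !gout //; apply: fP; rewrite ?inE.
pose m a := #|[set j | c j == a]|.
have clsg a : #|color_class setT g a| = cls a + m a.
  have -> : color_class setT g a = color_class (~: S) f a :|: v @: [set j | c j == a].
    apply/setP => x; rewrite !inE.
    case: (boolP (x \in S)) => [/inS [j ->]|xS].
      by rewrite gv /= (mem_imset _ _ vinj) inE.
    rewrite gout //=; case: (boolP (x \in v @: _)) => [/imsetP [j _ ej]|]; last by rewrite orbF.
    by case/negP: xS; rewrite ej imset_f.
  rewrite cardsU (card_imset _ vinj).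
  have -> : color_class (~: S) f a :&: v @: [set j | c j == a] = set0.
    apply/setP => x; rewrite !inE; case: (boolP (x \in S)) => //= xS.
    by apply/negP => /andP[_ /imsetP [j _ ej]]; case/negP: xS; rewrite ej imset_f.
  by rewrite cards0 subn0.
have m1 a : m a <= 1.
  rewrite /m -(card_imset _ cinj).
  apply: leq_trans (subset_leq_card (_ : _ \subset [set a])) _; last by rewrite cards1.
  by apply/subsetP => y /imsetP [j]; rewrite !inE => /eqP <- ->.
have mpos a : 0 < m a -> exists j, c j = a.
  by case/card_gt0P => j; rewrite inE => /eqP; exists j.
have cardT : #|[set: T]| = n' + s.
  by rewrite cardsT -(cardsC S) addnC /S (card_imset _ vinj) card_ord.
case: (posnP (n' + s)) => [N0|Npos].
  by left; apply: cards0_eq; rewrite cardT.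
right; rewrite cardT.
have cinS j : c j \in cs by rewrite /c mem_nth ?sz.
case: (posnP n') => [n0|npos].
  have cls0 a : cls a = 0.
    apply/eqP; rewrite -leqn0 -n0 /cls; apply: subset_leq_card.
    by apply/subsetP => x; rewrite inE => /andP[].
  have s0 : 0 < s <= k by rewrite sk andbT; lia.
  have [ce mo] := cm_char 0 s0; rewrite mul0n add0n in ce mo.
  rewrite n0 add0n ce mo; split.
    by move=> a; rewrite clsg cls0 add0n m1.
  apply: leq_trans (_ : #|c @: [set: 'I_s]| <= _); last first.
    by apply: leq_trans (leq_imset_card _ _) _; rewrite cardsT card_ord.
  apply: subset_leq_card; apply/subsetP => a; rewrite inE clsg cls0 add0n => /eqP ma.
  by have [j <-] := mpos a (ltac:(lia)); rewrite imset_f.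
case: fSE => [E|[hcls hfull]].
  by move: npos; rewrite /n' E cards0.
have FE : F = [set a | cls a == ceildiv n' k] by rewrite /F ifN //; lia.
have [a0 [r [nE rb]]] := decomp npos (ltac:(lia) : 0 < k).
have [ce mo] := cm_char a0 rb; rewrite -nE in ce mo.
have hfull' : #|F| <= r by rewrite -mo FE; exact: hfull.
rewrite ce in hcls FE.
rewrite {}nE -addnA.
case: (leqP (r + s) k) => rsk.
  have rb2 : 0 < r + s <= k by lia.
  have [ce2 mo2] := cm_char a0 rb2.
  rewrite ce2 mo2.
  have cF j : c j \notin F.
    apply/negP => cjF.
    have : has (mem F) cs by apply/hasP; exists (c j).
    by rewrite has_count; lia.
  split.
    move=> a; rewrite clsg.
    case: (posnP (m a)) => [-> | mp]; first by rewrite addn0 hcls.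
    have [j cj] := mpos a mp.
    have : cls a != a0.+1 by move: (cF j); rewrite cj FE inE.
    have := (hcls a : cls a <= a0.+1); have := m1 a; lia.
  apply: leq_trans (_ : #|F :|: c @: [set: 'I_s]| <= _).
    apply: subset_leq_card; apply/subsetP => a; rewrite !inE clsg => /eqP h.
    case: (posnP (m a)) => [m0 | mp].
      by rewrite FE inE; apply/orP; left; rewrite -h m0 addn0.
    by have [j <-] := mpos a mp; rewrite imset_f ?orbT.
  rewrite cardsU; apply: leq_trans (leq_subr _ _) _.
  apply: leq_add; first exact: hfull'.
  by apply: leq_trans (leq_imset_card _ _) _; rewrite cardsT card_ord.
have eN : a0 * k + (r + s) = a0.+1 * k + (r + s - k) by rewrite mulSnr; lia.
have rb2 : 0 < r + s - k <= k by lia.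
have [ce2 mo2] := cm_char a0.+1 rb2.
rewrite eN ce2 mo2; split.
  by move=> a; rewrite clsg; have := (hcls a : cls a <= a0.+1); have := m1 a; lia.
apply: leq_trans (_ : #|c @: [set j | c j \in F]| <= _).
  apply: subset_leq_card; apply/subsetP => a; rewrite !inE clsg => /eqP h.
  have mp : 0 < m a by have := (hcls a : cls a <= a0.+1); lia.
  have [j cj] := mpos a mp.
  rewrite -cj imset_f // inE FE inE cj; apply/eqP.
  by have := (hcls a : cls a <= a0.+1); have := m1 a; lia.
apply: leq_trans (leq_imset_card _ _) _.
rewrite -(count_nth_card' (mem F) (fun j => f (v j)) sz).
by apply: leq_trans hc _; have := hfull'; lia.
Qed.
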